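(* Let $g \ge h \ge 2$ be integers. There is a constant $C>0$ depending only on $g$ and $h$ such that for every positive integer $n$ and every $C_h[g]$ set $A \subset \{1,2,\dots,n\}$, $$|A| \le (g-1)^{1/h}\, n^{1-\frac{1}{h}} + C\, n^{\frac{1}{2}-\frac{1}{2h}}.$$
   Context: A set of integers $A$ is called a $C_h[g]$ set if for every set $X$ of $h$ integers there do not exist $g$ distinct integers $k_1,\dots,k_g$ such that $X+k_i \subset A$ for all $i=1,\dots,g$ (here $X+k=\{x+k : x\in X\}$). In words, $A$ contains no $g$ distinct translates of a common $h$-element set. *)

(* Defs.v *)
From Stdlib Require Import Reals ZArith List.
Import ListNotations.

Definition Chg_set (h g : nat) (A : Z -> Prop) : Prop :=
  ~ exists (X ks : list Z),
      NoDup X /\ length X = h /\ NoDup ks /\ length ks = g /\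
      forall k x, In k ks -> In x X -> A (x + k)%Z.

(* Main.v *)
Require Import Defs.
From Stdlib Require Import Reals ZArith List.
Open Scope R_scope.

Module MC.
Local Close Scope R_scope.
From Stdlib Require Import Lia.
From mathcomp Require Import all_boot.
From mathcomp Require Import zify.

Lemma card_sum (T : finType) (p : pred T) : #|[set x | p x]| = \sum_(x : T) p x.
Proof.
by rewrite -sum1_card big_mkcond /=; apply: eq_bigr => x _; rewrite inE; case: (p x).
Qed.

Lemma core1 (m T h g : nat) (P : nat -> bool) :
  (forall Y : {set 'I_m}, #|Y| = h ->
     #|[set t : 'I_T | Y \subset [set y : 'I_m | P (t + y)]]| < g) ->
  \sum_(t < T) 'C(#|[set y : 'I_m | P (t + y)]|, h) <= (g-1) * 'C(m, h).
Proof.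
move=> Hc.
have E (t : 'I_T) : 'C(#|[set y : 'I_m | P (t + y)]|, h) =
   \sum_(Y : {set 'I_m}) ((Y \subset [set y : 'I_m | P (t + y)]) && (#|Y| == h)).
  by rewrite -cards_draws card_sum.
rewrite (eq_bigr _ (fun t _ => E t)) exchange_big /=.
rewrite -[m in 'C(m, h)]card_ord -card_draws mulnC -sum_nat_const [X in _ <= X]big_mkcond /=.
apply: leq_sum => Y _; rewrite inE.
case: eqP => HY.
  under eq_bigr do rewrite andbT.
  rewrite -card_sum; move: (Hc Y HY) => H; rewrite subn1 -ltnS prednK //; exact: leq_ltn_trans (leq0n _) H.
under eq_bigr do rewrite andbF.
by rewrite sum_nat_const muln0.
Qed.

Lemma core2 (m T : nat) (s : seq nat) : uniq s -> (forall a, a \in s -> m <= a <= T) ->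
  m * size s <= \sum_(t < T.+1) #|[set y : 'I_m | (t + y) \in s]|.
Proof.
move=> Us Hs.
under eq_bigr do rewrite card_sum.
rewrite exchange_big /= -[m in m * _]card_ord -sum_nat_const.
apply: leq_sum => y _.
rewrite -card_sum cardE.
pose f := fun a => (inord (a - y) : 'I_T.+1).
rewrite -(size_map f s); apply: uniq_leq_size.
  rewrite map_inj_in_uniq // => a b Ha Hb /(congr1 val).
  have := Hs a Ha; have := Hs b Hb; have := ltn_ord y.
  move=> Hy Hb' Ha'; rewrite /f /= !inordK; lia.
move=> x /mapP [a Ha ->]; rewrite mem_enum inE /f.
have := Hs a Ha; have := ltn_ord y => Hy Ha'.
rewrite inordK ?subnK //; lia.
Qed.

Lemma expn_mono (m n e : nat) : m <= n -> m ^ e <= n ^ e.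
Proof. by move=> H; elim: e => [|e IH] //; rewrite !expnS leq_mul. Qed.

Lemma ffact_lb a k : (a - k) ^ k <= a ^_ k.
Proof.
elim: k a => [|k IH] a; first by rewrite expn0 ffactn0.
rewrite ffactnS expnS; apply: leq_mul; first exact: leq_subr.
have -> : a - k.+1 = a.-1 - k by lia.
exact: IH.
Qed.

Lemma ffact_ub a k : a ^_ k <= a ^ k.
Proof.
elim: k a => [|k IH] a; first by rewrite expn0 ffactn0.
rewrite ffactnS expnS; apply: leq_mul => //.
apply: leq_trans (IH _) _; apply: expn_mono; exact: leq_pred.
Qed.

Lemma mc_nat (m T h g : nat) (s : seq nat) : uniq s -> (forall a, a \in s -> m <= a <= T) ->
  (forall Y : {set 'I_m}, #|Y| = h ->
     #|[set t : 'I_T.+1 | Y \subset [set y : 'I_m | (t + y) \in s]]| < g) ->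
  exists l : seq nat, size l = T.+1 /\
  m * size s <= sumn l + h * size l /\ sumn [seq y ^ h | y <- l] <= (g-1) * m ^ h.
Proof.
move=> Us Hs Hc.
pose a := fun t : 'I_T.+1 => #|[set y : 'I_m | (t + y) \in s]|.
exists [seq a t - h | t <- enum 'I_T.+1].
have Hsz : size [seq a t - h | t <- enum 'I_T.+1] = T.+1 by rewrite size_map size_enum_ord.
split => //; rewrite Hsz; split.
  rewrite sumnE big_map big_enum /=.
  rewrite (eq_bigl xpredT) //. apply: leq_trans (@core2 m T s Us Hs) _.
  have -> : h * T.+1 = \sum_(t < T.+1) h by rewrite sum_nat_const card_ord mulnC.
  rewrite -big_split /=.
  by apply: leq_sum => t _; rewrite addnC -leq_subLR.
rewrite sumnE !big_map.
apply: (@leq_trans (\sum_(t < T.+1) 'C(a t, h) * h`!)).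
  by apply: leq_sum => t _; rewrite bin_ffact; exact: ffact_lb.
rewrite -big_distrl /=.
apply: (@leq_trans ((g-1) * 'C(m, h) * h`!)).
  by rewrite leq_mul2r (@core1 m T.+1 h g _ Hc) orbT.
rewrite -mulnA bin_ffact leq_mul2l ffact_ub orbT //.
Qed.

Lemma in_map_inv (T1 : Type) (T2 : eqType) (f : T1 -> T2) (l : list T1) x :
  x \in map f l -> exists b, List.In b l /\ x = f b.
Proof.
elim: l => //= b l IH; rewrite in_cons => /orP [/eqP -> | /IH [c [Hc ->]]].
  by exists b; split => //; left.
by exists c; split => //; right.
Qed.

Lemma In_map_inv' (T1 : eqType) (T2 : Type) (f : T1 -> T2) (l : seq T1) y :
  List.In y (map f l) -> exists x, x \in l /\ y = f x.
Proof.
elim: l => //= x l IH [<-|/IH [z [Hz ->]]].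
  by exists x; rewrite in_cons eqxx.
by exists z; rewrite in_cons Hz orbT.
Qed.

Lemma uniq_NoDup (T1 : eqType) T2 (f : T1 -> T2) (l : seq T1) :
  injective f -> uniq l -> List.NoDup (map f l).
Proof.
move=> Hf; elim: l => /= [|x l IH]; first by constructor.
move=> /andP [Hx Hu]; constructor; last exact: IH.
move=> /(@In_map_inv' T1 T2 f l) [z [Hz /Hf E]]; by rewrite E Hz in Hx.
Qed.

Lemma NoDup_uniq (T2 : eqType) (f : Z -> T2) (A : list Z) :
  (forall a b, List.In a A -> List.In b A -> f a = f b -> a = b) ->
  List.NoDup A -> uniq (map f A).
Proof.
elim: A => //= a A IH Hf /List.NoDup_cons_iff [Ha Hn].
rewrite IH ?andbT //; last by move=> x y Hx Hy; apply: Hf; right.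
apply/negP => /in_map_inv [b [Hb E]].
have Eab := Hf a b (or_introl erefl) (or_intror Hb) E.
by apply: Ha; rewrite Eab.
Qed.

Lemma size_length (T : Type) (l : seq T) : size l = length l.
Proof. by elim: l => //= ? ? ->. Qed.

Lemma comb (n m h g : nat) (A : list Z) :
  List.NoDup A -> (forall a, List.In a A -> (1 <= a <= Z.of_nat n)%Z) ->
  Chg_set h g (fun z => List.In z A) ->
  exists l : seq nat, size l = (n + m).+1 /\
  m * length A <= sumn l + h * size l /\ sumn [seq y ^ h | y <- l] <= (g-1) * m ^ h.
Proof.
move=> HA Hr Hchg.
pose f := fun a : Z => (Z.to_nat a + m)%nat.
have Us : uniq (map f A).
  apply: NoDup_uniq => // a b Ha Hb; rewrite /f => E.
  have := Hr a Ha; have := Hr b Hb; lia.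
have Hs : forall a, a \in map f A -> m <= a <= n + m.
  move=> x /in_map_inv [b [Hb ->]]; have := Hr b Hb; rewrite /f; lia.
have := @mc_nat m (n + m) h g (map f A) Us Hs.
rewrite size_map size_length; apply.
move=> Y HY; rewrite ltnNge; apply/negP => Hg.
apply: Hchg.
pose St := [set t : 'I_(n + m).+1 | Y \subset [set y : 'I_m | (t + y) \in map f A]].
exists (map (fun y : 'I_m => Z.of_nat y) (enum Y)).
exists (map (fun t : 'I_(n + m).+1 => (Z.of_nat t - Z.of_nat m)%Z) (take g (enum St))).
split; first by apply: uniq_NoDup; [move=> x y /= E; apply: val_inj => /=; lia | exact: enum_uniq].
split; first by rewrite -size_length size_map -cardE.
split.
  apply: uniq_NoDup; first by move=> x y /= E; apply: val_inj => /=; lia.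
  exact/take_uniq/enum_uniq.
split; first by rewrite -size_length size_map size_takel // -cardE.
move=> k x Hk Hx.
have [t [Ht ->]] := @In_map_inv' _ _ _ _ _ Hk.
have [y [Hy ->]] := @In_map_inv' _ _ _ _ _ Hx.
have Ht' : t \in St by rewrite -mem_enum; exact: mem_take Ht.
rewrite inE in Ht'.
have Hy' : y \in Y by rewrite -mem_enum.
have := subsetP Ht' y Hy'; rewrite inE => /in_map_inv [a [Ha E]].
have Hra := Hr a Ha; rewrite /f in E.
have -> : (Z.of_nat y + (Z.of_nat t - Z.of_nat m))%Z = a by lia.
done.
Qed.

Lemma sumn_fold (l : seq nat) : sumn l = List.fold_right Nat.add 0%nat l.
Proof. by elim: l => //= x l ->. Qed.

Lemma map_map' (T1 T2 : Type) (f : T1 -> T2) (l : seq T1) : map f l = List.map f l.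
Proof. by elim: l => //= x l ->. Qed.

Lemma expn_pow (a k : nat) : a ^ k = Nat.pow a k.
Proof. elim: k => //= k IH; by rewrite expnS IH. Qed.

Lemma comb' (n m h g : nat) (A : list Z) :
  List.NoDup A -> (forall a, List.In a A -> (1 <= a <= Z.of_nat n)%Z) ->
  Chg_set h g (fun z => List.In z A) ->
  exists l : list nat, length l = Nat.add (Nat.add n m) 1 /\
  Nat.le (Nat.mul m (length A)) (Nat.add (List.fold_right Nat.add 0%nat l) (Nat.mul h (length l))) /\
  Nat.le (List.fold_right Nat.add 0%nat (List.map (fun y => Nat.pow y h) l)) (Nat.mul (Nat.sub g 1) (Nat.pow m h)).
Proof.
move=> HA Hr Hchg; have [l [H1 [H2 H3]]] := @comb n m h g A HA Hr Hchg.
have E1 := @size_length _ l; have E2 := sumn_fold l.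
move/leP: H2 => H2; move/leP: H3 => H3.
rewrite (eq_map (fun y => expn_pow y h)) map_map' sumn_fold expn_pow in H3.
exists l; split; [lia | split; lia].
Qed.

End MC.

From Stdlib Require Import Lra Lia.
Open Scope R_scope.

Lemma exp_le' x y : x <= y -> exp x <= exp y.
Proof.
  intros H; destruct (Rle_lt_or_eq_dec _ _ H) as [H'|H'].
  - left; apply exp_increasing; auto.
  - rewrite H'; right; reflexivity.
Qed.

Lemma ln_le' x y : 0 < x -> x <= y -> ln x <= ln y.
Proof.
  intros Hx H; destruct (Rle_lt_or_eq_dec _ _ H) as [H'|H'].
  - left; apply ln_increasing; auto.
  - rewrite H'; right; reflexivity.
Qed.

Lemma exp_pow' x k : exp x ^ k = exp (INR k * x).
Proof.
  induction k as [|k IH].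
  - change (exp x ^ 0) with 1. rewrite Rmult_0_l, exp_0. reflexivity.
  - change (exp x ^ S k) with (exp x * exp x ^ k). rewrite IH, <- exp_plus, S_INR.
    f_equal; ring.
Qed.

Lemma root_pow k a : exp (/ INR (S k) * a) ^ (S k) = exp a.
Proof.
  rewrite exp_pow'. f_equal. field.
  rewrite S_INR. pose proof (pos_INR k). lra.
Qed.

Lemma tangent (k : nat) (y c : R) : 0 <= y -> 0 <= c ->
  INR (S k) * c ^ k * y - INR k * c ^ (S k) <= y ^ (S k).
Proof.
  intros Hy Hc. induction k as [|k IH].
  - simpl. lra.
  - assert (Hp : 0 <= c ^ k) by (apply pow_le; auto).
    change (c ^ S (S k)) with (c * (c * c ^ k)).
    change (c ^ S k) with (c * c ^ k) in *.
    change (y ^ S (S k)) with (y * y ^ S k).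
    rewrite (S_INR (S k)). rewrite S_INR in *.
    assert (H1 := Rmult_le_compat_l y _ _ Hy IH).
    assert (H2 : 0 <= (INR k + 1) * c ^ k * ((y - c) * (y - c))).
    { apply Rmult_le_pos; [apply Rmult_le_pos; [pose proof (pos_INR k); lra | auto] | apply Rle_0_sqr]. }
    nra.
Qed.

Lemma tangent_sum (k : nat) (c : R) (l : list nat) : 0 <= c ->
  INR (S k) * c ^ k * INR (fold_right Nat.add 0%nat l) - INR k * c ^ (S k) * INR (length l)
  <= INR (fold_right Nat.add 0%nat (map (fun y => Nat.pow y (S k)) l)).
Proof.
  intros Hc. induction l as [|y l IH].
  - cbn [fold_right map length]. change (INR 0) with 0. lra.
  - cbn [fold_right map length]. rewrite !plus_INR, (S_INR (length l)), pow_INR.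
    pose proof (tangent k (INR y) c (pos_INR y) Hc). lra.
Qed.

Theorem theorem1 (g h : nat) (Hh : (2 <= h)%nat) (Hgh : (h <= g)%nat) :
  exists C : R, C > 0 /\
    forall (n : nat) (A : list Z),
      (1 <= n)%nat ->
      NoDup A ->
      (forall a, In a A -> (1 <= a <= Z.of_nat n)%Z) ->
      Chg_set h g (fun z => In z A) ->
      INR (length A) <=
        Rpower (INR g - 1) (1 / INR h) * Rpower (INR n) (1 - 1 / INR h)
        + C * Rpower (INR n) (1 / 2 - 1 / (2 * INR h)).
Proof.
  destruct h as [|k]; [lia|].
  set (hR := INR (S k)).
  assert (HhR : 2 <= hR).
  { unfold hR. change 2 with (INR 2). apply le_INR. lia. }
  assert (Hg1 : 1 <= INR g - 1).
  { assert (INR 2 <= INR g) by (apply le_INR; lia). change (INR 2) with 2 in H. lra. }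
  set (e := / hR).
  assert (He : 0 < e <= / 2).
  { unfold e. split; [apply Rinv_0_lt_compat; lra | apply Rinv_le_contravar; lra]. }
  assert (E1 : 1 / hR = e) by (unfold e; field; lra).
  assert (E2 : 1 / (2 * hR) = e / 2) by (unfold e; field; lra).
  assert (Hedef : e = / INR (S k)) by reflexivity.
  clearbody e.
  set (G := Rpower (INR g - 1) (1 / hR)).
  assert (HG : 0 < G) by (unfold G, Rpower; apply exp_pos).
  exists (3 * G + 3 * hR). split; [lra|].
  intros n A Hn HA Hr Hchg.
  set (N := INR n).
  assert (HN : 1 <= N).
  { unfold N. change 1 with (INR 1). apply le_INR. lia. }
  set (u := ln N).
  assert (Hu : 0 <= u) by (unfold u; rewrite <- ln_1; apply ln_le'; lra).
  set (q := exp (e * (- u))).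
  set (r := exp ((1/2 - e/2) * u)).
  set (p := exp ((1/2 + e/2) * u)).
  assert (Hq0 : 0 < q) by (unfold q; apply exp_pos).
  assert (Hq1 : q <= 1) by (unfold q; rewrite <- exp_0; apply exp_le'; nra).
  assert (Hr1 : 1 <= r) by (unfold r; apply Rle_trans with (exp 0); [rewrite exp_0; lra | apply exp_le'; apply Rmult_le_pos; lra]).
  assert (Hp1 : 1 <= p) by (unfold p; apply Rle_trans with (exp 0); [rewrite exp_0; lra | apply exp_le'; apply Rmult_le_pos; lra]).
  assert (Hpq : p * q = r).
  { unfold p, q, r. rewrite <- exp_plus. f_equal. field. }
  assert (Hpr : p * r = N).
  { unfold p, r. rewrite <- exp_plus.
    replace ((1 / 2 + e / 2) * u + (1 / 2 - e / 2) * u) with u by field.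
    unfold u. apply exp_ln. lra. }
  destruct (archimed p) as [Hup1 Hup2].
  set (z := up p) in *.
  assert (Hz : (0 <= z)%Z).
  { apply Z.lt_le_incl, lt_IZR. change (IZR 0) with 0. lra. }
  set (m := Z.to_nat z).
  assert (Hm : INR m = IZR z) by (unfold m; rewrite INR_IZR_INZ, Z2Nat.id; auto).
  set (M := INR m) in *.
  assert (HM1 : p < M <= p + 1) by lra.
  destruct (MC.comb' n m (S k) g A HA Hr Hchg) as (l & Hl1 & Hl2 & Hl3).
  set (T := N + M + 1).
  assert (HT : N <= T) by (unfold T; lra).
  assert (HlT : INR (length l) = T).
  { rewrite Hl1, !plus_INR. reflexivity. }
  assert (H2R : M * INR (length A) <= INR (fold_right Nat.add 0%nat l) + hR * T).
  { apply le_INR in Hl2. rewrite mult_INR, plus_INR, mult_INR, HlT in Hl2. exact Hl2. }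
  assert (H3R : INR (fold_right Nat.add 0%nat (map (fun y => Nat.pow y (S k)) l)) <= (INR g - 1) * M ^ S k).
  { apply le_INR in Hl3. rewrite mult_INR, minus_INR, pow_INR in Hl3 by lia.
    change (INR 1) with 1 in Hl3. exact Hl3. }
  set (qT := exp (e * (- ln T))).
  assert (HqT0 : 0 < qT) by (unfold qT; apply exp_pos).
  assert (HqT : qT <= q).
  { unfold qT, q. apply exp_le'. assert (u <= ln T) by (unfold u; apply ln_le'; lra). nra. }
  set (c := G * M * qT).
  assert (Hc0 : 0 < c) by (unfold c; apply Rmult_lt_0_compat; [apply Rmult_lt_0_compat|]; lra).
  assert (Hch : c ^ S k * T = (INR g - 1) * M ^ S k).
  { unfold c. rewrite !Rpow_mult_distr.
    assert (G ^ S k = INR g - 1).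
    { unfold G, Rpower. rewrite E1, Hedef. rewrite root_pow. apply exp_ln. lra. }
    assert (qT ^ S k * T = 1).
    { unfold qT. rewrite Hedef, root_pow, exp_Ropp, exp_ln by lra. field. lra. }
    rewrite H. replace ((INR g - 1) * M ^ S k * qT ^ S k * T) with ((INR g - 1) * M ^ S k * (qT ^ S k * T)) by ring.
    rewrite H0. ring. }
  assert (Htan := tangent_sum k c l (Rlt_le _ _ Hc0)).
  rewrite HlT in Htan. fold hR in Htan.
  assert (Hck : 0 < c ^ k) by (apply pow_lt; auto).
  assert (HS : INR (fold_right Nat.add 0%nat l) <= c * T).
  { change (c ^ S k) with (c * c ^ k) in Hch, Htan.
    assert (hR = INR k + 1) by (unfold hR; apply S_INR).
    apply Rmult_le_reg_l with (hR * c ^ k); [apply Rmult_lt_0_compat; lra|].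
    nra. }
  assert (P1 : Rpower N (1 - 1 / hR) = N * q).
  { unfold Rpower, q. rewrite E1. replace ((1 - e) * ln N) with (ln N + e * (- u)) by (unfold u; ring).
    rewrite exp_plus, exp_ln by lra. reflexivity. }
  assert (P2 : Rpower N (1 / 2 - 1 / (2 * hR)) = r).
  { unfold Rpower, r. rewrite E2. reflexivity. }
  rewrite P1, P2.
  assert (HM0 : 0 < M) by lra.
  apply Rmult_le_reg_l with M; [lra|].
  assert (F1 : q * (M + 1) <= 3 * r) by nra.
  assert (F2 : N <= M * r) by nra.
  assert (F3 : M + 1 <= 2 * M * r) by nra.
  assert (F4 : G * M * (q * (M + 1)) <= G * M * (3 * r)).
  { apply Rmult_le_compat_l; [apply Rmult_le_pos|]; lra. }
  assert (F5 : G * M * qT * T <= G * M * q * T).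
  { apply Rmult_le_compat_r; [lra|]. apply Rmult_le_compat_l; [apply Rmult_le_pos|]; lra. }
  assert (F6 : hR * N <= hR * (M * r)) by (apply Rmult_le_compat_l; lra).
  assert (F7 : hR * (M + 1) <= hR * (2 * M * r)) by (apply Rmult_le_compat_l; lra).
  unfold c in HS. unfold T in *.
  nra.
Qed.
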